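(* Let $q$ be a prime power and $k,\delta,\alpha$ positive integers with $\alpha\ge3$ and $\delta\ge(\alpha-1)(k-1)$. Then, with $q,k,\delta,\alpha$ fixed and $n\to\infty$, $$B_q(n,k,\delta;\alpha)=O\!\left(q^{\left(1+\frac{1}{\lfloor\alpha/2\rfloor}\right)n}\right).$$
   Context: For a prime power $q$, $\mathcal{G}_q(n,k)$ denotes the set of all $k$-dimensional subspaces of $\mathbb{F}_q^n$. An $\alpha$-$(n,k,\delta)_q^c$ covering Grassmannian code is a subset $\mathcal{C}\subseteq\mathcal{G}_q(n,k)$ (no repeated codewords) such that every set of $\alpha$ distinct codewords of $\mathcal{C}$ spans a subspace of $\mathbb{F}_q^n$ of dimension at least $k+\delta$. $B_q(n,k,\delta;\alpha)$ denotes the maximum size of an $\alpha$-$(n,k,\delta)_q^c$ code. The implied constant in $O(\cdot)$ may depend on $q,k,\delta,\alpha$ but not on $n$. *)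

(* Defs.v *)
From mathcomp Require Import all_boot all_order all_algebra all_field.
From Stdlib Require Import Reals.
Set Implicit Arguments. Unset Strict Implicit. Unset Printing Implicit Defensive.
Import GRing.Theory.

(* Subspaces of F^n are {vspace 'rV[F]_n}; q = #|F| for a finite field F. *)

Definition covering_grassmannian_code (F : finFieldType) (n k delta alpha : nat)
  (C : seq {vspace 'rV[F]_n}) : Prop :=
  uniq C /\
  (forall U, U \in C -> \dim U = k) /\
  (forall S : seq {vspace 'rV[F]_n},
      uniq S -> size S = alpha -> {subset S <= C} ->
      (k + delta <= \dim (\sum_(U <- S) U)%VS)%N).

(* Main.v *)
Require Import Defs.
From mathcomp Require Import all_boot all_order all_algebra all_field.
From Stdlib Require Import Reals.
From mathcomp Require Import zify.
From Stdlib Require Import Lra Psatz.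
Set Implicit Arguments. Unset Strict Implicit. Unset Printing Implicit Defensive.
Import GRing.Theory.

Section Core.
Variable F : finFieldType.
Variable n : nat.
Local Open Scope ring_scope.

Lemma line2 (x y : 'rV[F]_n) : x != 0 -> y \notin <[x]>%VS -> (2 <= \dim (<[x]> + <[y]>)%VS)%nat.
Proof.
move=> x0 yx; rewrite leqNgt; apply/negP => H.
have: (<[x]> == <[x]> + <[y]>)%VS.
  rewrite eqEdim addvSl dim_vline x0 /=. lia.
move/eqP => E. move: yx; rewrite E. by rewrite memvE addvSr.
Qed.

Lemma core_ind (I : eqType) (Uf : I -> {vspace 'rV[F]_n}) (g : I -> 'rV[F]_n) (x : 'rV[F]_n) (k : nat) (T : {vspace 'rV[F]_n}) (s : seq I) :
  x != 0 -> x \in T ->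
  (forall j, j \in s -> [/\ x \in Uf j, g j \in Uf j, g j \in T, g j \notin <[x]>%VS & \dim (Uf j) = k]) ->
  (\dim (T + \sum_(j <- s) Uf j)%VS <= \dim T + size s * (k - 2))%nat.
Proof.
move=> x0 xT; elim: s => [|j s IH] H.
  by rewrite big_nil addv0 addn0.
have [xU gU gT gx dU] := H j (mem_head _ _).
have IH' := IH (fun i hi => H i (introT orP (or_intror hi))).
rewrite big_cons.
have -> : (T + (Uf j + \sum_(i <- s) Uf i) = (T + \sum_(i <- s) Uf i) + Uf j)%VS.
  by rewrite addvA (addvC T) -addvA addvC.
set W := (T + \sum_(i <- s) Uf i)%VS.
have TW : (T <= W)%VS by apply: addvSl.
have hcap : (2 <= \dim (W :&: Uf j))%nat.
  apply: leq_trans (line2 x0 gx) _; apply: dimvS.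
  rewrite subv_cap !subv_add -!memvE xU gU andbT.
  by rewrite (subvP TW _ xT) (subvP TW _ gT).
have hcapU : (\dim (W :&: Uf j) <= k)%nat by rewrite -dU; apply: dimvS; apply: capvSr.
have := dimv_sum_cap W (Uf j). rewrite dU /= mulSn. move: IH'; rewrite -/W. nia.
Qed.

Lemma core (I : eqType) (Uf : I -> {vspace 'rV[F]_n}) (g : I -> 'rV[F]_n) (x : 'rV[F]_n) (k delta : nat) (s : seq I) :
  x != 0 -> (2 <= k)%nat ->
  ((size s - 1) * (k - 1) <= delta)%nat ->
  (forall j, j \in s -> [/\ x \in Uf j, g j \in Uf j, g j \notin <[x]>%VS & \dim (Uf j) = k]) ->
  (k + delta <= \dim (\sum_(j <- s) Uf j)%VS)%nat ->
  \dim <<map g s>>%VS = size s.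
Proof.
move=> x0 k2 hd H hdim.
set T := (<[x]> + <<map g s>>)%VS.
have xT : x \in T by rewrite memvE addvSl.
have := @core_ind I Uf g x k T s x0 xT.
have H' : forall j, j \in s -> [/\ x \in Uf j, g j \in Uf j, g j \in T, g j \notin <[x]>%VS & \dim (Uf j) = k].
  move=> j hj; have [? ? ? ?] := H j hj; split => //.
  exact: (subvP (addvSr _ _) _ (memv_span (map_f g hj))).
move=> /(_ H') hind.
have h1 : (\dim (\sum_(j <- s) Uf j)%VS <= \dim (T + \sum_(j <- s) Uf j)%VS)%nat by apply: dimvS; apply: addvSr.
have h2 := dimv_sum_cap <[x]> <<map g s>>. rewrite dim_vline x0 /= in h2.
have h3 := dim_span (map g s). rewrite size_map in h3.
rewrite -/T in h2.
apply/eqP; rewrite eqn_leq h3 /=.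
move: hd hdim h1 h2 h3 hind.
set a := size s. set d := \dim <<map g s>>%VS. set dT := \dim T.
move: k2; clear H.
case: a => [|a]; first by [].
move=> h1 h2 h3 h4 h5 h6 k2.
have [k' Ek] : exists k', k = k'.+2 by exists k.-2; lia.
rewrite Ek in h2 h3 k2. rewrite subSS ?subn0 in k2. rewrite subn1 /= subSS ?subn0 in h2.
rewrite mulSn !subn1 /= in k2. rewrite mulnS in h2. move: h2 h3 h4 h5 k2. clearbody d dT. move: (\dim (\sum_(j <- s) Uf j)) (\dim (T + _)) (\dim (_ :&: _)) => D1 D2 D3. lia.
Qed.
End Core.
Section Count.
Variable F : finFieldType.
Variable n : nat.
Local Open Scope ring_scope.

Lemma pad (I : finType) (A K : {set I}) (a : nat) :
  A \subset K -> (#|A| <= a)%nat -> (a <= #|K|)%nat ->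
  exists T : {set I}, [/\ A \subset T, T \subset K & #|T| = a]%nat.
Proof.
move=> AK HA HK; move Hd: (a - #|A|)%nat => d.
elim: d A AK HA Hd => [|d IH] A AK HA Hd.
  exists A; split => //; lia.
have : ~~ (K \subset A).
  apply/negP => KA. have := subset_leq_card KA. lia.
case/subsetPn => j jK jA.
have jAK : (j |: A) \subset K by rewrite subUset sub1set jK AK.
have cj : #|j |: A| = (#|A|.+1)%nat by rewrite cardsU1 jA.
have [T [jAT TK cT]] := IH (j |: A) jAK ltac:(lia) ltac:(lia).
exists T; split => //; apply: subset_trans _ jAT; apply: subsetUr.
Qed.

Lemma count_lemma (I : finType) (K : {set I}) (g : I -> 'rV[F]_n) (alpha m : nat) :
  (2 * m <= alpha)%nat -> (alpha <= #|K|)%nat ->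
  (forall T : {set I}, T \subset K -> (#|T| = alpha)%nat -> (\dim <<[seq g j | j <- enum T]>>%VS = alpha)%nat) ->
  ('C(#|K|, m) <= expn #|F| n)%nat.
Proof.
move=> ham haK Hfree.
rewrite -cards_draws.
set D := [set S : {set I} | S \subset K & #|S| == m].
have inj : {in D &, injective (fun S : {set I} => (\sum_(j in S) g j))}.
  move=> S1 S2; rewrite !inE => /andP[S1K /eqP c1] /andP[S2K /eqP c2] /= E.
  apply/eqP; apply/negPn/negP => neq.
  have [i iS1 iS2] : exists2 i, i \in S1 & i \notin S2.
    apply/subsetPn. apply/negP => S12. move: neq. by rewrite eqEcard S12 c1 c2 leqnn.
  have [cU _] := leq_card_setU S1 S2.
  have [T [UT TK cT]] := @pad I (S1 :|: S2) K alpha ltac:(by rewrite subUset S1K S2K) ltac:(lia) haK.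
  have iT : i \in T by apply: (subsetP UT); rewrite inE iS1.
  have gi : g i \in <<[seq g j | j <- enum (T :\ i)]>>%VS.
    have -> : g i = (\sum_(j in S2) g j - \sum_(j in S1 | j != i) g j).
      by rewrite -E (bigD1 i iS1) /= GRing.addrK.
    apply: GRing.rpredB; apply: GRing.rpred_sum => j hj; apply: memv_span; apply: map_f;
      rewrite mem_enum !inE.
      have -> : j != i by apply/eqP => ji; move: iS2; rewrite -ji hj.
      by rewrite (subsetP UT) // inE hj orbT.
    move: hj => /andP [hj ->] /=. by rewrite (subsetP UT) // inE hj.
  have sub : (<<[seq g j | j <- enum T]>> <= <<[seq g j | j <- enum (T :\ i)]>>)%VS.
    apply/span_subvP => v /mapP [j jT ->]. case: (eqVneq j i) => [->|ji] //.
    by apply: memv_span; apply: map_f; rewrite mem_enum !inE ji -(mem_enum T).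
  have := dimvS sub; rewrite Hfree //.
  have := dim_span [seq g j | j <- enum (T :\ i)]. rewrite size_map -cardE.
  have := cardsD1 i T. rewrite iT. lia.
rewrite -(card_in_imset inj). apply: leq_trans (max_card _) _.
by rewrite card_mx mul1n.
Qed.
End Count.
Lemma ffact_low (m K : nat) : (expn (K - m) m <= K ^_ m)%nat.
Proof.
elim: m K => [|m IH] K; first by rewrite expn0 ffactn0.
rewrite ffactnS expnS.
have -> : (K - m.+1 = K.-1 - m)%nat by lia.
apply: leq_mul; first lia.
exact: IH.
Qed.

Lemma fact_le_pow (m : nat) : (m`! <= expn m m)%nat.
Proof.
elim: m => [|m IH] //.
rewrite factS expnS; apply: leq_mul => //.
apply: leq_trans IH _.
case: m => [|m] //. by rewrite leq_exp2r.
Qed.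

Lemma binom_bound (K m Q t : nat) : (0 < m)%nat -> ('C(K, m) <= Q)%nat -> (Q <= expn t m)%nat ->
  (K <= m + m * t)%nat.
Proof.
move=> m0 hC hQ.
have h1 : (expn (K - m) m <= expn (m * t) m)%nat.
  apply: leq_trans (ffact_low m K) _.
  rewrite -bin_ffact expnMn mulnC.
  apply: leq_mul; first exact: fact_le_pow.
  exact: leq_trans hC hQ.
rewrite leq_exp2r // in h1. lia.
Qed.
Lemma INR_expn (a b : nat) : INR (expn a b) = (INR a ^ b)%R.
Proof.
elim: b => [|b IH]; first by rewrite expn0.
by rewrite expnS mult_INR IH /=.
Qed.

Lemma real_bound (q m n A : nat) : (1 < q)%nat -> (0 < m)%nat ->
  (INR (expn q n) * INR A * INR (expn q (n %/ m + 1)) <=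
   INR (A * q) * Rpower (INR q) ((1 + / INR m) * INR n))%R.
Proof.
move=> q1 m0.
have q0 : (0 < INR q)%R by apply: lt_0_INR; apply/ltP; lia.
have q1' : (1 <= INR q)%R by change 1%R with (INR 1); apply: le_INR; apply/leP; lia.
have m0' : (0 < INR m)%R by apply: lt_0_INR; apply/ltP; lia.
rewrite !INR_expn -!Rpower_pow // mult_INR.
have -> : ((1 + / INR m) * INR n = INR n + INR n / INR m)%R by field; lra.
rewrite Rpower_plus.
have hdiv : (INR (n %/ m) <= INR n / INR m)%R.
  apply: (Rmult_le_reg_r (INR m)) => //.
  rewrite -mult_INR /Rdiv Rmult_assoc Rinv_l ?Rmult_1_r; last lra.
  apply: le_INR; apply/leP; exact: leq_trunc_div.
have he : (Rpower (INR q) (INR (n %/ m + 1)) <= Rpower (INR q) (INR n / INR m) * INR q)%R.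
  rewrite plus_INR Rpower_plus (_ : INR 1 = 1%R) // Rpower_1 //.
  apply: Rmult_le_compat_r; first lra.
  exact: Rle_Rpower.
have hA : (0 <= INR A)%R by apply: pos_INR.
have hn : (0 <= Rpower (INR q) (INR n))%R by left; apply: exp_pos.
have := Rmult_le_compat_l _ _ _ (Rmult_le_pos _ _ hn hA) he.
nra.
Qed.
Section Main.
Variable F : finFieldType.
Variable n : nat.
Local Open Scope ring_scope.

Lemma nat_main (k delta alpha t : nat) (C : seq {vspace 'rV[F]_n}) :
  (0 < k)%nat -> (3 <= alpha)%nat -> ((alpha - 1) * (k - 1) <= delta)%nat ->
  (expn #|F| n <= expn t alpha./2)%nat ->
  @covering_grassmannian_code F n k delta alpha C ->
  (size C <= expn #|F| n * (alpha + alpha./2 + alpha./2 * t))%nat.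
Proof.
move=> k0 a3 hd ht [uC [dimC codeC]].
set m := alpha./2.
have hm : (0 < m /\ 2 * m <= alpha)%nat.
  have := odd_double_half alpha; rewrite -muln2 -/m. case: (odd alpha) => /=; lia.
set N := size C.
pose Uf (j : 'I_N) := nth 0%VS C j.
pose vx (j : 'I_N) := vpick (Uf j).
have UfC : forall j, Uf j \in C by move=> j; apply: mem_nth; exact: ltn_ord.
have dU : forall j, \dim (Uf j) = k by move=> j; apply: dimC.
have vx0 : forall j, vx j != 0.
  move=> j; rewrite vpick0 -dimv_eq0 dU; lia.
have vxU : forall j, vx j \in Uf j by move=> j; apply: memv_pick.
have Ufinj : injective Uf.
  move=> i j /eqP; rewrite /Uf nth_uniq ?ltn_ord // => /eqP; exact: val_inj.
have cls : forall x : 'rV[F]_n, (#|[set j | vx j == x]| <= alpha + m + m * t)%nat.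
  move=> x; set K := [set j | vx j == x].
  have [k1|k2] := leqP k 1.
    have : (#|K| <= 1)%nat.
      apply/card_le1_eqP => j1 j2; rewrite !inE => /eqP e1 /eqP e2.
      apply: Ufinj.
      have E : forall j, vx j = x -> <[x]>%VS = Uf j.
        move=> j ej; apply/eqP; rewrite eqEdim -memvE -ej vxU dU dim_vline.
        rewrite -[vx j]/(vx j) ej. move: (vx0 j); rewrite ej => -> /=; lia.
      by rewrite -(E _ e1) -(E _ e2).
    lia.
  have [small|big] := ltnP #|K| alpha; first lia.
  have [j0 j0K] : exists j0, j0 \in K by apply/card_gt0P; lia.
  have x0 : x != 0 by move: j0K; rewrite inE => /eqP <-.
  pose g (j : 'I_N) := odflt 0 [pick w | (w \in Uf j) && (w \notin <[x]>%VS)].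
  have gP : forall j, (g j \in Uf j) && (g j \notin <[x]>%VS).
    move=> j; rewrite /g; case: pickP => [w //|none] /=.
    have : ~~ (Uf j <= <[x]>)%VS.
      apply/negP => /dimvS; rewrite dU dim_vline x0 /=; lia.
    case/subvPn => w wU wx. by move: (none w); rewrite wU wx.
  have := @count_lemma F n _ K g alpha m (proj2 hm) big.
  move=> /(_ _) H.
  have H2 : ('C(#|K|, m) <= expn #|F| n)%nat.
    apply: H => T TK cT.
    have eT : forall j, j \in enum T -> j \in K by move=> j; rewrite mem_enum => /(subsetP TK).
    have sz : size (enum T) = alpha by rewrite -cardE.
    apply: (etrans (@core F n _ Uf g x k delta (enum T) x0 k2 _ _ _)) => //.
    - by rewrite sz.
    - move=> j /eT; rewrite inE => /eqP ej; have /andP[gU gx] := gP j.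
      by split => //; rewrite -ej.
    - have -> : (\sum_(j <- enum T) Uf j = \sum_(U <- map Uf (enum T)) U)%VS by rewrite big_map.
      apply: codeC.
      + by rewrite map_inj_uniq // enum_uniq.
      + by rewrite size_map.
      + by move=> U /mapP [j _ ->].
  have := binom_bound (proj1 hm) H2 ht. lia.
have -> : N = (\sum_(x : 'rV[F]_n) #|[set j | vx j == x]|)%nat.
  rewrite -{1}(card_ord N) -sum1_card (partition_big vx predT) //=.
  apply: eq_bigr => x _; rewrite -sum1_card; apply: eq_bigl => j; by rewrite inE.
apply: leq_trans; first by apply: leq_sum => x _; exact: cls x.
by rewrite sum_nat_const card_mx mul1n.
Qed.
End Main.

Theorem mainTheorem4 (F : finFieldType) (k delta alpha : nat) :
  (0 < k)%N -> (0 < delta)%N -> (3 <= alpha)%N ->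
  ((alpha - 1) * (k - 1) <= delta)%N ->
  exists (c : R) (N : nat),
    forall (n : nat) (C : seq {vspace 'rV[F]_n}),
      (N <= n)%N ->
      @covering_grassmannian_code F n k delta alpha C ->
      (INR (size C) <= c * Rpower (INR #|F|)
                                  ((1 + / INR (alpha./2)) * INR n))%R.
Proof.
move=> k0 d0 a3 hd.
exists (INR ((alpha + 2 * alpha./2) * #|F|)), 0%nat => n C _ code.
have hm : (0 < alpha./2)%nat.
  have := odd_double_half alpha; rewrite -muln2. case: (odd alpha) => /=; lia.
have q1 : (1 < #|F|)%nat := card_finNzRing_gt1 F.
set m := alpha./2 in hm *.
set t := expn #|F| (n %/ m + 1).
have ht : (expn #|F| n <= expn t m)%nat.
  rewrite /t -expnM; apply: leq_pexp2l; first lia.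
  have := divn_eq n m; have := ltn_pmod n hm. nia.
have t1 : (0 < t)%nat by rewrite /t expn_gt0; lia.
have := nat_main k0 a3 hd ht code.
move=> hs.
have hs' : (size C <= expn #|F| n * (alpha + 2 * m) * t)%nat.
  apply: leq_trans hs _; rewrite -mulnA leq_mul2l; apply/orP; right. nia.
apply: Rle_trans (real_bound n (alpha + 2 * m) q1 hm).
rewrite -!mult_INR; apply: le_INR; apply/leP. exact: hs'.
Qed.
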